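(* Let $\alpha,\beta\in\mathbb F_q^*$. For nonempty words $\mathfrak a,\mathfrak b\in\langle\Sigma\rangle$, $\varphi_\alpha(\mathfrak a)\diamond\varphi_\beta(\mathfrak b)=\varphi_{\alpha\beta}(\mathfrak a\diamond\mathfrak b)$; and for nonempty words $\mathfrak a,\mathfrak b\in\langle\Gamma\rangle$, also $\varphi_\alpha(\mathfrak a)\diamond\varphi_\beta(\mathfrak b)=\varphi_{\alpha\beta}(\mathfrak a\diamond\mathfrak b)$.
   Context: Let $q$ be a prime power. For positive integers $r,s,j$ put $\Delta^j_{r,s}=(-1)^{r-1}\binom{j-1}{r-1}+(-1)^{s-1}\binom{j-1}{s-1}$ if $(q-1)\mid j$ and $0$ otherwise. Let $\Sigma=\{x_n\}_{n\in\mathbb N}$ and $\Gamma=\{x_{n,\varepsilon}\}_{n\in\mathbb N,\varepsilon\in\mathbb F_q^*}$ be alphabets, $\langle\Sigma\rangle,\langle\Gamma\rangle$ their sets of words (empty word $1$, juxtaposition = concatenation), and $\mathfrak C$, $\mathfrak D$ the $\mathbb F_q$-vector spaces with bases $\langle\Sigma\rangle$, $\langle\Gamma\rangle$. A word of $\langle\Sigma\rangle$ is identified with the word of $\langle\Gamma\rangle$ obtained by giving every letter character $1$ ($x_n\leftrightarrow x_{n,1}$). On $\mathfrak D$ bilinear products are defined recursively by $1\diamond\mathfrak a=\mathfrak a\diamond1=\mathfrak a$, $1\sqcup\!\sqcup\mathfrak a=\mathfrak a\sqcup\!\sqcup1=\mathfrak a$ and, for nonempty $\mathfrak a=x_{a,\alpha}\mathfrak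 a_-$, $\mathfrak b=x_{b,\beta}\mathfrak b_-$: $\mathfrak a\diamond\mathfrak b=x_{a+b,\alpha\beta}(\mathfrak a_-\sqcup\!\sqcup\mathfrak b_-)+\sum_{i+j=a+b}\Delta^j_{a,b}x_{i,\alpha\beta}(x_{j,1}\sqcup\!\sqcup(\mathfrak a_-\sqcup\!\sqcup\mathfrak b_-))$, $\mathfrak a\sqcup\!\sqcup\mathfrak b=x_{a,\alpha}(\mathfrak a_-\sqcup\!\sqcup\mathfrak b)+x_{b,\beta}(\mathfrak a\sqcup\!\sqcup\mathfrak b_-)+\mathfrak a\diamond\mathfrak b$; on $\mathfrak C$ by the same recursion without characters. For $\alpha\in\mathbb F_q^*$, the horizontal map $\varphi_\alpha:\mathfrak C\to\mathfrak D$ is linear with $\varphi_\alpha(1)=1$, $\varphi_\alpha(x_{i_1}x_{i_2}\cdots x_{i_n})=x_{i_1,\alpha}x_{i_2,1}\cdots x_{i_n,1}$; it is extended to $\varphi_\alpha:\mathfrak D\to\mathfrak D$ by $\varphi_\alpha(1)=1$ and $\varphi_\alpha(x_{u,\varepsilon}\mathfrak u_-)=x_{u,\alpha\varepsilon}\mathfrak u_-$. *)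

(* Defs.v *)
From mathcomp Require Import all_boot all_algebra.
Set Implicit Arguments. Unset Strict Implicit. Unset Printing Implicit Defensive.
Import GRing.Theory.
Local Open Scope ring_scope.

Section Defs.
Variable F : finFieldType.

Definition Delta (r s j : nat) : F :=
  if ((#|F|).-1 %| j)%N then
    (-1) ^+ r.-1 * ('C(j.-1, r.-1))%:R + (-1) ^+ s.-1 * ('C(j.-1, s.-1))%:R
  else 0.

(* letter x_{n,eps} is the pair (n, eps) *)
Definition gword := seq (nat * F).
(* an element of D is a finite formal linear combination of words *)
Definition gvec := seq (F * gword).
(* coefficient of the basis word w in v; elements of D are equal iff all
   coefficients agree *)
Definition gcoef (v : gvec) (w : gword) : F := \sum_(p <- v | p.2 == w) p.1.
Definition gscale (c : F) (v : gvec) : gvec := map (fun p => (c * p.1, p.2)) v.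
Definition gcons (x : nat * F) (v : gvec) : gvec := map (fun p => (p.1, x :: p.2)) v.
Definition gbilin (f : gword -> gvec) (v : gvec) : gvec :=
  flatten (map (fun p => gscale p.1 (f p.2)) v).

(* the diamond recursion step for a = x a_-, b = y b_-, given a shuffle [sh] *)
Definition gdia_step (sh : gword -> gword -> gvec) (x : nat * F) (a' : gword)
    (y : nat * F) (b' : gword) : gvec :=
  let S := sh a' b' in
  let a := x.1 in let b := y.1 in let e := x.2 * y.2 in
  gcons ((a + b)%N, e) S ++
  flatten [seq gscale (Delta a b j)
                 (gcons ((a + b - j)%N, e) (gbilin (sh [:: (j, 1)]) S))
          | j <- iota 1 (a + b).-1].

(* shuffle with fuel (fuel > total length suffices) *)
Fixpoint gsh (n : nat) (a b : gword) : gvec :=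
  match n with
  | 0 => [::]
  | n'.+1 =>
    match a, b with
    | [::], _ => [:: (1, b)]
    | _, [::] => [:: (1, a)]
    | x :: a', y :: b' =>
        gcons x (gsh n' a' b) ++ gcons y (gsh n' a b') ++ gdia_step (gsh n') x a' y b'
    end
  end.

Definition gshuffle (a b : gword) : gvec := gsh (size a + size b).+1 a b.

Definition gdiamond (a b : gword) : gvec :=
  match a, b with
  | [::], _ => [:: (1, b)]
  | _, [::] => [:: (1, a)]
  | x :: a', y :: b' => gdia_step (gsh (size a + size b)) x a' y b'
  end.

Definition cword := seq nat.
Definition cvec := seq (F * cword).
Definition cscale (c : F) (v : cvec) : cvec := map (fun p => (c * p.1, p.2)) v.
Definition ccons (x : nat) (v : cvec) : cvec := map (fun p => (p.1, x :: p.2)) v.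
Definition cbilin (f : cword -> cvec) (v : cvec) : cvec :=
  flatten (map (fun p => cscale p.1 (f p.2)) v).

Definition cdia_step (sh : cword -> cword -> cvec) (a : nat) (a' : cword)
    (b : nat) (b' : cword) : cvec :=
  let S := sh a' b' in
  ccons (a + b)%N S ++
  flatten [seq cscale (Delta a b j) (ccons (a + b - j)%N (cbilin (sh [:: j]) S))
          | j <- iota 1 (a + b).-1].

Fixpoint csh (n : nat) (a b : cword) : cvec :=
  match n with
  | 0 => [::]
  | n'.+1 =>
    match a, b with
    | [::], _ => [:: (1, b)]
    | _, [::] => [:: (1, a)]
    | x :: a', y :: b' =>
        ccons x (csh n' a' b) ++ ccons y (csh n' a b') ++ cdia_step (csh n') x a' y b'
    end
  end.

Definition cshuffle (a b : cword) : cvec := csh (size a + size b).+1 a b.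

Definition cdiamond (a b : cword) : cvec :=
  match a, b with
  | [::], _ => [:: (1, b)]
  | _, [::] => [:: (1, a)]
  | x :: a', y :: b' => cdia_step (csh (size a + size b)) x a' y b'
  end.

Definition phiC (al : F) (w : cword) : gword :=
  match w with
  | [::] => [::]
  | n :: w' => (n, al) :: map (fun m => (m, 1)) w'
  end.
Definition phiCv (al : F) (v : cvec) : gvec := map (fun p => (p.1, phiC al p.2)) v.

Definition phiG (al : F) (w : gword) : gword :=
  match w with
  | [::] => [::]
  | x :: w' => (x.1, al * x.2) :: w'
  end.
Definition phiGv (al : F) (v : gvec) : gvec := map (fun p => (p.1, phiG al p.2)) v.

Definition cvalid (w : cword) : bool := all (fun n => 0 < n)%N w.
Definition gvalid (w : gword) : bool := all (fun x => (0 < x.1)%N && (x.2 != 0)) w.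

End Defs.

(* Main.v *)
Require Import Defs.
From mathcomp Require Import all_boot all_algebra.
Import GRing.Theory.
Local Open Scope ring_scope.

Section Aux.
Variable F : finFieldType.

Definition lift1 (w : cword) : gword F := map (fun m => (m, 1)) w.
Definition liftv (v : cvec F) : gvec F := map (fun p => (p.1, lift1 p.2)) v.

Lemma gcons_lift n (v : cvec F) : gcons (n, 1) (liftv v) = liftv (ccons n v).
Proof. by elim: v => [|p v IH] //=; rewrite IH. Qed.

Lemma gscale_lift c (v : cvec F) : gscale c (liftv v) = liftv (cscale c v).
Proof. by elim: v => [|p v IH] //=; rewrite IH. Qed.

Lemma gbilin_lift f g (v : cvec F) :
  (forall w, f (lift1 w) = liftv (g w)) ->
  gbilin f (liftv v) = liftv (cbilin g v).
Proof.
move=> H; elim: v => [|p v IH] //=.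
rewrite /gbilin /cbilin /= in IH *.
by rewrite H gscale_lift IH /liftv map_cat.
Qed.

Lemma gsh_lift k (u v : cword) : gsh k (lift1 u) (lift1 v) = liftv (csh F k u v).
Proof.
elim: k u v => [|k IH] u v //=.
case: u => [|n u'] /=; first by [].
case: v => [|m v'] /=; first by [].
rewrite -[(n, 1) :: _]/(lift1 (n :: u')) -[(m, 1) :: _]/(lift1 (m :: v')).
rewrite !IH !gcons_lift /liftv !map_cat -/liftv; congr (_ ++ (_ ++ _)).
rewrite /gdia_step /cdia_step /= IH mulr1 -/(liftv _) gcons_lift /liftv ?map_cat -/(liftv _).
congr (_ ++ _).
rewrite map_flatten -map_comp; congr flatten; apply: eq_map => j /=.
rewrite (@gbilin_lift _ (csh F k [:: j])); last by move=> w; exact: (IH [:: j] w).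
by rewrite gcons_lift gscale_lift.
Qed.

Lemma phiCv_ccons c n (v : cvec F) : phiCv c (ccons n v) = gcons (n, c) (liftv v).
Proof. by elim: v => [|p v IH] //=; rewrite IH. Qed.

Lemma phiCv_scale c d (v : cvec F) : phiCv c (cscale d v) = gscale d (phiCv c v).
Proof. by elim: v => [|p v IH] //=; rewrite IH. Qed.

Lemma phiGv_gcons c n e (v : gvec F) :
  phiGv c (gcons (n, e) v) = gcons (n, c * e) v.
Proof. by elim: v => [|p v IH] //=; rewrite IH. Qed.

Lemma phiGv_scale c d (v : gvec F) : phiGv c (gscale d v) = gscale d (phiGv c v).
Proof. by elim: v => [|p v IH] //=; rewrite IH. Qed.

Lemma dia_lift k al be n m (a' b' : cword) :
  gdia_step (gsh (F:=F) k) (n, al) (lift1 a') (m, be) (lift1 b')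
  = phiCv (al * be) (cdia_step (csh F k) n a' m b').
Proof.
rewrite /gdia_step /cdia_step /= gsh_lift.
rewrite /phiCv map_cat -/(phiCv _ _) phiCv_ccons; congr (_ ++ _).
rewrite map_flatten -map_comp; congr flatten; apply: eq_map => j /=.
rewrite -/(phiCv _ _) phiCv_scale phiCv_ccons; congr gscale; congr gcons.
apply: gbilin_lift => u; exact: (gsh_lift _ [:: j] u).
Qed.

End Aux.

Theorem lemma5p4 (F : finFieldType) (al be : F) :
  al != 0 -> be != 0 ->
  (forall a b : cword, a != [::] -> b != [::] -> cvalid a -> cvalid b ->
     forall w : gword F,
       gcoef (gdiamond (phiC al a) (phiC be b)) w
       = gcoef (phiCv (al * be) (cdiamond F a b)) w)
  /\
  (forall a b : gword F, a != [::] -> b != [::] -> gvalid a -> gvalid b ->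
     forall w : gword F,
       gcoef (gdiamond (phiG al a) (phiG be b)) w
       = gcoef (phiGv (al * be) (gdiamond a b)) w).
Proof.
move=> _ _; split.
- case=> [|n a'] // [|m b'] // _ _ _ _ w; congr gcoef.
  have E : (size (phiC al (n :: a')) + size (phiC be (m :: b')) =
            size (n :: a') + size (m :: b'))%N by rewrite /= !size_map.
  rewrite /gdiamond /cdiamond E; exact: dia_lift.
- case=> [|x a'] // [|y b'] // _ _ _ _ w; congr gcoef.
  rewrite /= /gdia_step /=.
  rewrite /phiGv map_cat -/(phiGv _ _) phiGv_gcons mulrACA; congr (_ ++ _).
  rewrite map_flatten -map_comp; congr flatten; apply: eq_map => j /=.
  by rewrite -/(phiGv _ _) phiGv_scale phiGv_gcons.
Qed.
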